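(* Suppose there exists a Whitney-maximum graph in $\mathcal{C}_{n,m}$. Then every uniformly most reliable graph in $\mathcal{C}_{n,m}$ is a $0$-element in $\mathcal{C}_{n,m}$.
   Context: $\mathcal{C}_{n,m}$ denotes the set of all connected simple graphs on $n$ vertices and $m$ edges. For a graph $G$ with vertex set $V$, $\kappa(G)$ is its number of connected components, $r(G)=|V|-\kappa(G)$, $c(G)=|E(G)|-|V|+\kappa(G)$. $\mathcal{S}(G)$ is the set of all spanning subgraphs of $G$. The Whitney polynomial is $W_G(x,y)=\sum_{H\in\mathcal{S}(G)}x^{r(G)-r(H)}y^{c(H)}$. A bivariate polynomial is nonnegative if all its coefficients are nonnegative real numbers. $G\in\mathcal{C}_{n,m}$ is Whitney-maximum if for every $H\in\mathcal{C}_{n,m}$ there is a nonnegative polynomial $Q_H$ with $W_G(x,y)-W_H(x,y)=(1-xy)Q_H(x,y)$. $N_i^{(1)}(G)$ is the number of connected spanning subgraphs of $G$ with exactly $i$ edges, and $R_G^{(1)}(p)=\sum_{i=0}^m N_i^{(1)}(G)p^i(1-p)^{m-i}$. A graph $G\in\mathcal{C}_{n,m}$ is uniformly most reliable if $R_G^{(1)}(p)\ge R_H^{(1)}(p)$ for all $H\in\mathcal{C}_{n,m}$ and $p\in[0,1]$. $G\in\mathcal{C}_{n,m}$ is a $0$-element in $\mathcal{C}_{n,m}$ if $N_i^{(1)}(G)\ge N_i^{(1)}(H)$ for all $i\in\{0,\ldots,m\}$ and all $H\in\mathcal{C}_{n,m}$. *)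

(* Defs.v *)
From HB Require Import structures.
From mathcomp Require Import all_boot all_order all_algebra.
From mathcomp Require Import Rstruct.
Set Implicit Arguments. Unset Strict Implicit. Unset Printing Implicit Defensive.
Import Order.TTheory GRing.Theory Num.Theory.

(* A simple graph on the vertex set 'I_n is a set of edges, each edge being
   a 2-element subset of 'I_n.  Spanning subgraphs are subsets of the edge set. *)
Definition graph (n : nat) := {set {set 'I_n}}.

Definition simple_graph n (G : graph n) : Prop :=
  forall e, e \in G -> #|e| = 2%N.

Definition adj n (G : graph n) : rel 'I_n := fun x y => [set x; y] \in G.

Definition kappa n (G : graph n) : nat :=
  #|[set [set y | connect (adj G) x y] | x : 'I_n]|.

Definition rk n (G : graph n) : nat := (n - kappa G)%N.
Definition nullity n (G : graph n) : nat := (#|G| + kappa G - n)%N.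

Definition connected_graph n (G : graph n) : Prop := kappa G = 1%N.

Definition inC (n m : nat) (G : graph n) : Prop :=
  [/\ simple_graph G, #|G| = m & connected_graph G].

Local Open Scope ring_scope.

(* Bivariate polynomials over R: {poly {poly Rdefinitions.R}}, inner variable x, outer y. *)
Definition varx : {poly {poly Rdefinitions.R}} := ('X)%:P.
Definition vary : {poly {poly Rdefinitions.R}} := 'X.

Definition whitney n (G : graph n) : {poly {poly Rdefinitions.R}} :=
  \sum_(H in powerset G) varx ^+ (rk G - rk H) * vary ^+ (nullity H).

Definition nonneg_poly2 (Q : {poly {poly Rdefinitions.R}}) : Prop :=
  forall i j, 0 <= (Q`_i)`_j.

Definition whitney_maximum n m (G : graph n) : Prop :=
  inC m G /\
  forall H : graph n, inC m H ->
    exists Q : {poly {poly Rdefinitions.R}}, nonneg_poly2 Q /\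
      whitney G - whitney H = (1 - varx * vary) * Q.

Definition Nconn n (G : graph n) (i : nat) : nat :=
  #|[set H in powerset G | (kappa H == 1%N) && (#|H| == i)]|.

Definition reliability n (G : graph n) (p : Rdefinitions.R) : Rdefinitions.R :=
  \sum_(i < #|G|.+1) (Nconn G i)%:R * p ^+ i * (1 - p) ^+ (#|G| - i).

Definition uniformly_most_reliable n m (G : graph n) : Prop :=
  inC m G /\
  forall H : graph n, inC m H ->
    forall p : Rdefinitions.R, 0 <= p <= 1 -> reliability H p <= reliability G p.

Definition zero_element n m (G : graph n) : Prop :=
  inC m G /\
  forall H : graph n, inC m H ->
    forall i : nat, (i <= m)%N -> (Nconn H i <= Nconn G i)%N.

(* Main.v *)
Require Import Defs.
From mathcomp Require Import all_boot all_order all_algebra.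
From mathcomp Require Import zify.
From mathcomp Require Import Rstruct.
Set Implicit Arguments. Unset Strict Implicit.

Lemma adj_sym n (H : graph n) : symmetric (adj H).
Proof. by move=> x y; rewrite /adj setUC. Qed.

Lemma csym n (H : graph n) x y : connect (adj H) x y = connect (adj H) y x.
Proof. exact: (sym_connect_sym (@adj_sym n H)). Qed.

Lemma key n (H : graph n) (a b x y : 'I_n) :
  connect (adj ([set a; b] |: H)) x y ->
  connect (adj H) x y \/
  ((connect (adj H) x a \/ connect (adj H) x b) /\
   (connect (adj H) y a \/ connect (adj H) y b)).
Proof.
move/connectP=> [p pth ->] {y}.
elim: p x pth => [|z p IH] x /=; first by left; rewrite connect0.
move/andP=> [e pth]; have [Hc|[Hz Hy]] := IH z pth; rewrite /adj in_setU1 in e.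
- case/orP: e => [/eqP e|e].
  + have xab : x \in [set a; b] by rewrite -e !inE eqxx.
    have zab : z \in [set a; b] by rewrite -e !inE eqxx orbT.
    right; split.
      by rewrite !inE in xab; case/orP: xab => /eqP ->; [left|right]; rewrite connect0.
    rewrite !inE in zab; case/orP: zab => /eqP Ez; subst z; rewrite csym in Hc; [left|right]; exact: Hc.
  + left; apply: connect_trans Hc; exact: connect1.
- case/orP: e => [/eqP e|e].
  + have xab : x \in [set a; b] by rewrite -e !inE eqxx.
    right; split=> //.
    by rewrite !inE in xab; case/orP: xab => /eqP ->; [left|right]; rewrite connect0.
  + right; split=> //.
    have xz : connect (adj H) x z by exact: connect1.
    by case: Hz => Hz; [left|right]; apply: connect_trans Hz.
Qed.

Definition cls n (H : graph n) (x : 'I_n) : {set 'I_n} := [set y | connect (adj H) x y].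

Lemma kE n (H : graph n) : kappa H = #|[set cls H x | x : 'I_n]|.
Proof. by []. Qed.

Lemma cls_eq n (H : graph n) x y : connect (adj H) x y -> cls H x = cls H y.
Proof.
move=> cxy; apply/setP=> z; rewrite !inE; apply/idP/idP=> h.
  by apply: connect_trans h; rewrite csym.
exact: connect_trans h.
Qed.

Lemma card_imset_le (aT rT rT' : finType) (f : aT -> rT) (g : aT -> rT') (A : {set aT}) :
  {in A &, forall x y, g x = g y -> f x = f y} -> #|f @: A| <= #|g @: A|.
Proof.
move=> hfg.
have [->|[x0 x0A]] := set_0Vmem A; first by rewrite imset0 cards0.
pose h C := if [pick x in A | g x == C] is Some x then f x else f x0.
have -> : f @: A = h @: (g @: A).
  apply/setP=> C; apply/imsetP/imsetP.
    move=> [x xA ->]; exists (g x); first exact: imset_f.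
    rewrite /h; case: pickP => [y /andP [yA /eqP gy]|/(_ x)]; last by rewrite xA eqxx.
    by apply: hfg.
  move=> [D /imsetP [x xA ->] ->]; rewrite /h; case: pickP => [y /andP [yA /eqP gy]|/(_ x)]; last by rewrite xA eqxx.
  by exists y.
exact: leq_imset_card.
Qed.

Lemma kappa_step n (H : graph n) (a b : 'I_n) :
  kappa H <= (kappa ([set a; b] |: H)).+1.
Proof.
set H' := [set a; b] |: H.
pose D := [set x | connect (adj H) x b].
rewrite !kE.
apply: (@leq_trans (#|cls H @: D| + #|cls H @: ~: D|)).
  apply: leq_trans (leq_card_setU _ _); apply: subset_leq_card.
  apply/subsetP=> C /imsetP [x _ ->]; rewrite in_setU.
  by case: (boolP (x \in D)) => xD; [rewrite imset_f | rewrite orbC imset_f // in_setC xD].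
rewrite -add1n; apply: leq_add.
  rewrite -(cards1 (cls H b)); apply: subset_leq_card; apply/subsetP=> C /imsetP [x xD ->].
  by rewrite inE in xD; rewrite inE (cls_eq xD).
apply: (@leq_trans #|cls H' @: ~: D|).
  apply: card_imset_le => x y; rewrite !inE => xD yD e.
  have : y \in cls H' x by rewrite e inE connect0.
  rewrite inE => /key [|[[xa|xb] [ya|yb]]]; first exact: cls_eq.
  - by apply: cls_eq; apply: connect_trans xa _; rewrite csym.
  - by rewrite yb in yD.
  - by rewrite xb in xD.
  - by rewrite xb in xD.
apply: subset_leq_card; apply/subsetP=> C /imsetP [x _ ->]; exact: imset_f.
Qed.

Lemma kappa0 n : kappa (set0 : graph n) = n.
Proof.
rewrite kE.
have h : cls set0 =1 (fun x : 'I_n => [set x]).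
  move=> x; apply/setP=> y; rewrite !inE; apply/idP/idP; last by move/eqP->; rewrite connect0.
  move/connectP=> [[|z p] /= pth ->] //.
  by move: pth; rewrite /adj inE.
rewrite (eq_imset _ h) card_imset ?card_ord //; exact: set1_inj.
Qed.

Lemma edges_lb n (H : graph n) : simple_graph H -> n <= kappa H + #|H|.
Proof.
move: {2}#|H| (erefl #|H|) => k; elim: k H => [|k IH] H Hk sH.
  by move/eqP: Hk; rewrite cards_eq0 => /eqP ->; rewrite kappa0 cards0 addn0.
have : 0 < #|H| by rewrite Hk.
case/card_gt0P=> e eH.
have /eqP/cards2P [a [b [_ eab]]] := sH e eH.
have HD : H = [set a; b] |: (H :\ e) by rewrite -eab setD1K.
have sHD : simple_graph (H :\ e) by move=> f; rewrite inE => /andP [_]; exact: sH.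
have cHD : #|H :\ e| = k by have := cardsD1 e H; rewrite eH Hk add1n => -[].
have := IH _ cHD sHD; have := kappa_step (H :\ e) a b; rewrite -HD.
rewrite Hk cHD; lia.
Qed.

Import GRing.Theory Num.Theory.
Local Open Scope ring_scope.

Lemma whitney_coef n (G : graph n) j :
  (whitney G)`_j`_0 =
  (#|[set H in powerset G | (rk G - rk H == 0)%N && (nullity H == j)]|)%:R.
Proof.
rewrite /whitney !coef_sum.
have h : forall H : graph n, ((varx ^+ (rk G - rk H) * vary ^+ nullity H)`_j)`_0 =
   ((rk G - rk H == 0)%N && (nullity H == j))%:R.
  move=> H; rewrite /varx /vary -rmorphXn coefCM coefXn.
  case: (j == _) /eqP => [->|ne]; rewrite ?eqxx ?mulr1 ?mulr0 ?coef0 ?coefXn.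
    by rewrite eq_sym andbT; case: (_ == _).
  have /negbTE -> : nullity H != j by apply/eqP => e; apply: ne.
  by rewrite andbF.
rewrite (eq_bigr _ (fun H _ => h H)).
rewrite -sum1_card natr_sum.
rewrite big_mkcond /= [RHS]big_mkcond /=.
apply: eq_bigr => H _.
rewrite !inE; case: (H \subset G) => //=; case: (_ && _) => //.
Qed.

Lemma idcoef (Q : {poly {poly Rdefinitions.R}}) j :
  ((1 - varx * vary) * Q)`_j`_0 = Q`_j`_0.
Proof.
rewrite mulrBl mul1r -mulrA coefB /varx coefCM coefB coefXM eqxx.
by rewrite subr0.
Qed.

Lemma wm_coef n m (W H : graph n) : whitney_maximum m W -> inC m H -> forall j,
  (#|[set K in powerset H | (rk H - rk K == 0)%N && (nullity K == j)]| <=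
   #|[set K in powerset W | (rk W - rk K == 0)%N && (nullity K == j)]|)%N.
Proof.
move=> [_ hW] iH j; have [Q [Qnn e]] := hW H iH.
have : 0 <= (whitney W - whitney H)`_j`_0 by rewrite e idcoef; exact: Qnn.
by rewrite coefB coefB !whitney_coef subr_ge0 ler_nat.
Qed.

Lemma kappa_le n (H : graph n) : (kappa H <= n)%N.
Proof. by rewrite kE; apply: leq_trans (leq_imset_card _ _) _; rewrite card_ord. Qed.

Lemma kappa_pos n (H : graph n) : (0 < n)%N -> (0 < kappa H)%N.
Proof.
move=> n0; rewrite kE; apply/card_gt0P; exists (cls H (Ordinal n0)).
exact: imset_f.
Qed.

Lemma simple_sub n (G K : graph n) : simple_graph G -> K \subset G -> simple_graph K.
Proof. by move=> sG /subsetP sK e /sK; exact: sG. Qed.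

Lemma conn_count n m (G : graph n) i : inC m G -> (n.-1 <= i)%N ->
  Nconn G i = #|[set K in powerset G | (rk G - rk K == 0)%N && (nullity K == i - n.-1)%N]|.
Proof.
move=> [sG _ cG] ni; rewrite /Nconn; apply: eq_card => K; rewrite !inE.
case sub: (K \subset G) => //=.
have := edges_lb (simple_sub sG sub); have := kappa_le G; have := kappa_le K.
move: cG; rewrite /connected_graph /rk /nullity => cG.
have n0 : (0 < n)%N by move: (kappa_le G); rewrite cG.
have := kappa_pos K n0.
rewrite cG => k1 k2 k3 k4.
move: (kappa K) (#|K|) k1 k2 k4 => kk c k1 k2 k4.
apply/andP/andP => -[/eqP h1 /eqP h2]; split; apply/eqP; lia.
Qed.

Lemma conn_small n m (G : graph n) i : inC m G -> (i < n.-1)%N -> Nconn G i = 0%N.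
Proof.
move=> [sG _ cG] ni; rewrite /Nconn; apply/eqP; rewrite cards_eq0; apply/eqP/setP => K.
rewrite !inE; apply/negP => /andP [sub /andP [/eqP k1 /eqP k2]].
have := edges_lb (simple_sub sG sub); rewrite k1 k2; lia.
Qed.

Lemma wm_zero n m (W H : graph n) : whitney_maximum m W -> inC m H -> forall i,
  (Nconn H i <= Nconn W i)%N.
Proof.
move=> hW iH i; have iW := hW.1.
case: (ltnP i n.-1) => ni; first by rewrite (conn_small iH ni).
rewrite (conn_count iH ni) (conn_count iW ni); exact: wm_coef hW iH _.
Qed.
From mathcomp Require Import lra ring.
Import Order.TTheory.

Theorem mainTheorem8 (n m : nat) :
  (exists W : graph n, whitney_maximum m W) ->
  forall G : graph n, uniformly_most_reliable m G -> zero_element m G.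
Proof.
move=> [W hW] G [iG hG]; split=> // H iH i im.
apply: leq_trans (wm_zero hW iH i) _.
have iW := hW.1.
pose p : Rdefinitions.R := 2^-1.
have p01 : 0 <= p <= 1 by rewrite /p; apply/andP; split; lra.
have hle := hG W iW p p01.
have cG : #|G| = m by case: iG.
have cW : #|W| = m by case: iW.
pose w k : Rdefinitions.R := p ^+ k * (1 - p) ^+ (m - k).
have wpos : forall k, 0 < w k.
  by move=> k; rewrite /w mulr_gt0 // exprn_gt0 // /p; lra.
pose F (k : 'I_m.+1) := ((Nconn W k)%:R - (Nconn G k)%:R) * w k.
have F0 : forall k, 0 <= F k.
  move=> k; rewrite /F mulr_ge0 ?subr_ge0 ?ler_nat ?(ltW (wpos _)) //.
  exact: wm_zero hW iG k.
have sF : \sum_k F k = 0.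
  apply/eqP; rewrite eq_le sumr_ge0 ?andbT; last by move=> k _; exact: F0.
  have -> : \sum_k F k = reliability W p - reliability G p.
    rewrite /reliability cG cW -sumrB; apply: eq_bigr => k _; rewrite /F /w; ring.
  by rewrite subr_le0.
have := @psumr_eq0P _ 'I_m.+1 xpredT F (fun k _ => F0 k) sF (Ordinal (im : (i < m.+1)%N)) isT.
rewrite /F /= => /eqP; rewrite mulf_eq0 (gt_eqF (wpos i)) orbF subr_eq0 eqr_nat.
by move/eqP->.
Qed.
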